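(* Let $Q\in\mathbb R^{m\times n}$ with $\mathrm{rank}(Q)=n$, $p\in\mathbb R^m$, $r>0$, $\mathcal S=\{x\in\mathbb R^n:\|Qx-p\|_2\le r\}$ with $\mathcal S\cap\mathbb Z^n\neq\emptyset$, and $\alpha\in\mathbb R^n$. Then $$\min_{x\in\mathcal S\cap\mathbb Z^n}\alpha^Tx-\min_{x\in\mathcal S}\alpha^Tx\le 2\,\|Q(Q^TQ)^{-1}\alpha\|_2\,\mu(Q).$$
   Context: For $Q\in\mathbb R^{m\times n}$ of full column rank, $\mu(Q)$ denotes the covering radius of the lattice $Q\mathbb Z^n$: $\mu(Q)=\max_{x\in\mathbb R^n}\min_{z\in\mathbb Z^n}\|Qx-Qz\|_2$. *)

(* Defs.v *)
From HB Require Import structures.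
From mathcomp Require Import all_boot all_order all_algebra.
From mathcomp Require Import all_classical all_reals.
Set Implicit Arguments. Unset Strict Implicit. Unset Printing Implicit Defensive.
Import Order.TTheory GRing.Theory Num.Theory.
Local Open Scope ring_scope.
Local Open Scope classical_set_scope.

Definition norm2 {R : realType} {k : nat} (v : 'cV[R]_k) : R :=
  Num.sqrt (\sum_(i < k) (v i 0) ^+ 2).

Definition is_int_vec {R : realType} {k : nat} (z : 'cV[R]_k) : Prop :=
  forall i, z i 0 \is a Num.int.

Definition dotv {R : realType} {k : nat} (a x : 'cV[R]_k) : R := (a^T *m x) 0 0.

Definition covering_radius {R : realType} {m n : nat} (Q : 'M[R]_(m, n)) : R :=
  sup [set inf [set norm2 (Q *m x - Q *m z) | z in is_int_vec] | x in [set: 'cV[R]_n]].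

Definition ellS {R : realType} {m n : nat} (Q : 'M[R]_(m, n)) (p : 'cV[R]_m) (r : R)
  : set 'cV[R]_n := [set x | norm2 (Q *m x - p) <= r].

(* Main.v *)
Require Import Defs.
From HB Require Import structures.
From mathcomp Require Import all_boot all_order all_algebra.
From mathcomp Require Import all_classical all_reals.
From mathcomp Require Import ring lra.
Import Order.TTheory GRing.Theory Num.Theory.
Local Open Scope ring_scope.
Local Open Scope classical_set_scope.

Section Aux.
Variable R : realType.

Lemma dotvE {k} (u v : 'cV[R]_k) : dotv u v = \sum_i u i 0 * v i 0.
Proof. by rewrite /dotv mxE; apply: eq_bigr => i _; rewrite mxE. Qed.

Lemma dotv_ge0 {k} (v : 'cV[R]_k) : 0 <= dotv v v.
Proof. by rewrite dotvE; apply: sumr_ge0 => i _; rewrite -expr2 sqr_ge0. Qed.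

Lemma norm2_ge0 {k} (v : 'cV[R]_k) : 0 <= norm2 v.
Proof. exact: sqrtr_ge0. Qed.

Lemma norm2_sq {k} (v : 'cV[R]_k) : norm2 v ^+ 2 = dotv v v.
Proof.
rewrite /norm2 sqr_sqrtr; last by apply: sumr_ge0 => i _; rewrite sqr_ge0.
by rewrite dotvE; apply: eq_bigr => i _; rewrite expr2.
Qed.

Lemma dotv0_eq0 {k} (v : 'cV[R]_k) : dotv v v = 0 -> v = 0.
Proof.
rewrite dotvE => H; apply/matrixP => i j; rewrite (ord1 j) mxE.
have h0 : forall i : 'I_k, predT i -> 0 <= v i 0 * v i 0 by move=> l _; rewrite -expr2 sqr_ge0.
have := @psumr_eq0P _ _ predT (fun i => v i 0 * v i 0) h0 H i isT.
by move/eqP; rewrite -expr2 sqrf_eq0 => /eqP.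
Qed.

Lemma norm2_eq0 {k} (v : 'cV[R]_k) : norm2 v = 0 -> v = 0.
Proof. by move=> H; apply: dotv0_eq0; rewrite -norm2_sq H expr2 mulr0. Qed.

Lemma dotvC {k} (u v : 'cV[R]_k) : dotv u v = dotv v u.
Proof. by rewrite !dotvE; apply: eq_bigr => i _; rewrite mulrC. Qed.

Lemma dotvDr {k} (u v w : 'cV[R]_k) : dotv u (v + w) = dotv u v + dotv u w.
Proof. by rewrite !dotvE -big_split; apply: eq_bigr => i _; rewrite mxE mulrDr. Qed.

Lemma dotvNr {k} (u v : 'cV[R]_k) : dotv u (- v) = - dotv u v.
Proof. by rewrite !dotvE -sumrN; apply: eq_bigr => i _; rewrite mxE mulrN. Qed.

Lemma dotvBr {k} (u v w : 'cV[R]_k) : dotv u (v - w) = dotv u v - dotv u w.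
Proof. by rewrite dotvDr dotvNr. Qed.

Lemma dotvZr {k} (u v : 'cV[R]_k) a : dotv u (a *: v) = a * dotv u v.
Proof. by rewrite !dotvE mulr_sumr; apply: eq_bigr => i _; rewrite mxE; ring. Qed.

Lemma dotvDl {k} (u v w : 'cV[R]_k) : dotv (v + w) u = dotv v u + dotv w u.
Proof. by rewrite dotvC dotvDr !(dotvC u). Qed.
Lemma dotvNl {k} (u v : 'cV[R]_k) : dotv (- v) u = - dotv v u.
Proof. by rewrite dotvC dotvNr dotvC. Qed.
Lemma dotvBl {k} (u v w : 'cV[R]_k) : dotv (v - w) u = dotv v u - dotv w u.
Proof. by rewrite dotvDl dotvNl. Qed.
Lemma dotvZl {k} (u v : 'cV[R]_k) a : dotv (a *: v) u = a * dotv v u.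
Proof. by rewrite dotvC dotvZr dotvC. Qed.

Lemma CS {k} (u v : 'cV[R]_k) : dotv u v <= norm2 u * norm2 v.
Proof.
set a := norm2 u; set b := norm2 v.
have a0 : 0 <= a by exact: norm2_ge0.
have b0 : 0 <= b by exact: norm2_ge0.
have [a0e|an0] := eqVneq a 0.
  by rewrite a0e (norm2_eq0 u a0e) mul0r dotvE big1 // => i _; rewrite mxE mul0r.
have [b0e|bn0] := eqVneq b 0.
  by rewrite b0e (norm2_eq0 v b0e) mulr0 dotvE big1 // => i _; rewrite mxE mulr0.
have H := dotv_ge0 (b *: u - a *: v).
rewrite !(dotvBl, dotvBr, dotvZl, dotvZr) (dotvC v u) -[dotv u u](norm2_sq u) -[dotv v v](norm2_sq v) -/a -/b in H.
have ab : 0 < a * b by rewrite mulr_gt0 // lt0r ?an0 ?bn0.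
have : a * b * dotv u v <= a * b * (a * b) by nra.
by rewrite ler_pM2l.
Qed.

Lemma norm2N {k} (v : 'cV[R]_k) : norm2 (- v) = norm2 v.
Proof. by rewrite /norm2; congr Num.sqrt; apply: eq_bigr => i _; rewrite mxE sqrrN. Qed.

Lemma CSN {k} (u v : 'cV[R]_k) : - (norm2 u * norm2 v) <= dotv u v.
Proof. by rewrite lerNl -dotvNr -(norm2N v) CS. Qed.

Lemma norm2_le {k} (u v : 'cV[R]_k) : (norm2 u <= norm2 v) = (dotv u u <= dotv v v).
Proof.
rewrite /norm2 ler_sqrt; last by apply: sumr_ge0 => i _; rewrite sqr_ge0.
by rewrite !dotvE; congr (_ <= _); apply: eq_bigr => i _; rewrite expr2.
Qed.

Lemma norm2_triangle {k} (u v : 'cV[R]_k) : norm2 (u + v) <= norm2 u + norm2 v.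
Proof.
have h1 := norm2_ge0 u; have h2 := norm2_ge0 v; have h3 := norm2_ge0 (u+v).
have := CS u v.
have : norm2 (u + v) ^+ 2 = norm2 u ^+ 2 + 2 * dotv u v + norm2 v ^+ 2.
  by rewrite !norm2_sq !(dotvDl, dotvDr) (dotvC v u); ring.
nra.
Qed.

Lemma norm2Z {k} (v : 'cV[R]_k) a : norm2 (a *: v) = `|a| * norm2 v.
Proof.
rewrite /norm2 -sqrtr_sqr -sqrtrM ?sqr_ge0 // mulr_sumr; congr Num.sqrt.
by apply: eq_bigr => i _; rewrite mxE exprMn.
Qed.


Lemma unit_QtQ {m n} (Q : 'M[R]_(m, n)) : \rank Q = n -> Q^T *m Q \in unitmx.
Proof.
move=> rkQ.
have rfQ : row_free Q^T by rewrite /row_free mxrank_tr rkQ.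
rewrite -row_free_unit -kermx_eq0; apply/eqP/row_matrixP => i; rewrite row0.
set v := row i (kermx (Q^T *m Q)).
have vA : v *m (Q^T *m Q) = 0 by apply/eqP; rewrite -sub_kermx row_sub.
set u := v *m Q^T.
have uQ : u *m Q = 0 by rewrite /u -mulmxA.
have u0 : u = 0.
  have h : dotv u^T u^T = 0.
    rewrite /dotv trmxK.
    have -> : u^T = Q *m v^T by rewrite /u trmx_mul trmxK.
    by rewrite mulmxA uQ mul0mx mxE.
  by have := dotv0_eq0 _ h; move/(congr1 trmx); rewrite trmxK trmx0.
by apply/eqP; rewrite -(mulmx_free_eq0 _ rfQ) -/u u0.
Qed.

Lemma cov_bound {m n} (Q : 'M[R]_(m, n)) :
  has_ubound [set inf [set norm2 (Q *m x - Q *m z) | z in is_int_vec] | x in [set: 'cV[R]_n]].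
Proof.
exists (Num.sqrt (\sum_i (\sum_j `|Q i j|) ^+ 2)).
move=> _ [x _ <-].
set z : 'cV[R]_n := \col_j ((Num.floor (x j 0))%:~R).
have zint : is_int_vec z by move=> j; rewrite mxE intr_int.
have lb : has_lbound [set norm2 (Q *m x - Q *m z) | z in is_int_vec].
  by exists 0 => _ [y _ <-]; exact: norm2_ge0.
apply: (le_trans (ge_inf lb _)); first by exists z.
rewrite -mulmxBr /norm2 ler_sqrt; last by apply: sumr_ge0 => i _; rewrite sqr_ge0.
apply: ler_sum => i _.
set t := _ i 0.
have ht : `|t| <= \sum_j `|Q i j|.
  rewrite /t mxE; apply: (le_trans (ler_norm_sum _ _ _)); apply: ler_sum => j _.
  rewrite normrM !mxE; apply: ler_piMr => //.
  have := floor_itv (x j 0); rewrite intrD => /andP [h1 h2].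
  rewrite ger0_norm ?subr_ge0 //; lra.
rewrite -(real_normK (num_real t)).
have := normr_ge0 t; nra.
Qed.

End Aux.
Lemma sq_le {R : realType} {a b : R} : 0 <= a -> 0 <= b -> (a <= b) <-> (a ^+ 2 <= b ^+ 2).
Proof. by move=> a0 b0; split => h; nra. Qed.

Theorem proposition6p2 (R : realType) (m n : nat) (Q : 'M[R]_(m, n))
  (p : 'cV[R]_m) (r : R) (alpha : 'cV[R]_n) :
  \rank Q = n -> 0 < r ->
  (ellS Q p r `&` is_int_vec) !=set0 ->
  inf [set dotv alpha x | x in ellS Q p r `&` is_int_vec]
  - inf [set dotv alpha x | x in ellS Q p r]
  <= 2 * norm2 (Q *m invmx (Q^T *m Q) *m alpha) * covering_radius Q.
Proof.
move=> rkQ r0 [z0 [z0S z0Z]].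
have uA := unit_QtQ _ _ rkQ.
set A := Q^T *m Q in uA *.
set G := invmx A.
set w := Q *m G *m alpha.
set xc := G *m (Q^T *m p).
set p2 := p - Q *m xc.
set mu := covering_radius Q.
have Qp2 : Q^T *m p2 = 0.
  by rewrite /p2 mulmxBr /xc !mulmxA -/A mulmxV // mul1mx subrr.
have GtA : G^T *m A = 1%:M.
  by rewrite /G trmx_inv /A trmx_mul trmxK -/A mulVmx.
have key : forall x, dotv alpha x = dotv w (Q *m x).
  move=> x; rewrite /dotv /w !trmx_mul -!mulmxA (mulmxA Q^T) -/A (mulmxA G^T) GtA mul1mx.
  by [].
have orth : forall d, dotv (Q *m d) p2 = 0.
  by move=> d; rewrite /dotv trmx_mul -mulmxA Qp2 mulmx0 mxE.
have pyth : forall x, norm2 (Q *m x - p) ^+ 2 = norm2 (Q *m (x - xc)) ^+ 2 + norm2 p2 ^+ 2.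
  move=> x.
  have -> : Q *m x - p = Q *m (x - xc) - p2.
    by apply/matrixP => i j; rewrite /p2 mulmxBr !mxE; ring.
  rewrite !norm2_sq dotvBl (dotvBr _ (Q *m (x - xc)) (Q *m (x - xc)) p2) (dotvBr _ p2 (Q *m (x - xc)) p2) orth (dotvC _ p2) orth; ring.
set d2 := norm2 p2 ^+ 2.
have d20 : 0 <= d2 by rewrite /d2 sqr_ge0.
have rr0 : 0 <= r ^+ 2 - d2.
  move: z0S; rewrite /ellS /= (sq_le (norm2_ge0 _ _) (ltW r0)) pyth -/d2.
  have := sqr_ge0 (norm2 (Q *m (z0 - xc))); lra.
set r' := Num.sqrt (r ^+ 2 - d2).
have r'0 : 0 <= r' by exact: sqrtr_ge0.
have r'2 : r' ^+ 2 = r ^+ 2 - d2 by rewrite sqr_sqrtr.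
have memS : forall x, ellS Q p r x <-> norm2 (Q *m (x - xc)) <= r'.
  move=> x; rewrite /ellS /= (sq_le (norm2_ge0 _ _) (ltW r0)) pyth -/d2
     (sq_le (norm2_ge0 _ _) r'0) r'2.
  by split => h; lra.
set c0 := dotv alpha xc.
set nw := norm2 w.
have nw0 : 0 <= nw by exact: norm2_ge0.
have decomp : forall x, dotv alpha x = c0 + dotv w (Q *m (x - xc)).
  by move=> x; rewrite -key dotvBr /c0; ring.
set L := c0 - nw * r'.
have lowS : forall x, ellS Q p r x -> L <= dotv alpha x.
  move=> x /memS h; rewrite decomp /L.
  have := CSN _ w (Q *m (x - xc)); rewrite -/nw.
  have := norm2_ge0 _ (Q *m (x - xc)); nra.
have upS : forall x, ellS Q p r x -> dotv alpha x <= L + 2 * nw * r'.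
  move=> x /memS h; rewrite decomp /L.
  have := CS _ w (Q *m (x - xc)); rewrite -/nw.
  have := norm2_ge0 _ (Q *m (x - xc)); nra.
set SZ := [set dotv alpha x | x in ellS Q p r `&` is_int_vec].
set SS := [set dotv alpha x | x in ellS Q p r].
have infSS : L <= inf SS.
  apply: lb_le_inf; first by exists (dotv alpha z0), z0.
  by move=> _ [x xS <-]; exact: lowS.
have lbSZ : has_lbound SZ by exists L => _ [x [xS _] <-]; exact: lowS.
suff claim : forall e, 0 < e -> exists z, [/\ ellS Q p r z, is_int_vec z &
    dotv alpha z <= L + 2 * nw * mu + e].
  apply/ler_addgt0Pr => e e0.
  have [z [zS zZ hz]] := claim e e0.
  have : inf SZ <= dotv alpha z by apply: ge_inf => //; exists z.
  rewrite -/nw; lra.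
move=> e e0.
have case1 : r' <= mu \/ nw = 0 -> exists z, [/\ ellS Q p r z, is_int_vec z &
    dotv alpha z <= L + 2 * nw * mu + e].
  move=> hc; exists z0; split => //; have := upS _ z0S.
  by case: hc => hc; [nra | rewrite hc; lra].
have [hle|hlt] := lerP r' mu; first by apply: case1; left.
have [hnw|hnw] := eqVneq nw 0; first by apply: case1; right.
have nwp : 0 < nw by rewrite lt0r hnw.
set eps := Num.min (r' - mu) (e / (2 * nw)).
have eps0 : 0 < eps by rewrite lt_min subr_gt0 hlt /= divr_gt0 // mulr_gt0.
have eps1 : eps <= r' - mu by rewrite /eps ge_min lexx.
have eps2 : 2 * nw * eps <= e.
  have h : eps <= e / (2 * nw) by rewrite /eps ge_min lexx orbT.
  have : 2 * nw * eps <= 2 * nw * (e / (2 * nw)) by rewrite ler_wpM2l // mulr_ge0.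
  have -> : 2 * nw * (e / (2 * nw)) = e by field; rewrite hnw.
  by [].
set s := (r' - mu - eps) / nw.
have s0 : 0 <= s by rewrite /s divr_ge0 //; lra.
have snw : s * nw = r' - mu - eps by rewrite /s; field; rewrite hnw.
set y := xc - s *: (G *m alpha).
have Qy : Q *m y = Q *m xc - s *: w.
  by rewrite /y mulmxBr -scalemxAr /w (mulmxA Q G alpha).
set Iy := inf [set norm2 (Q *m y - Q *m z) | z in is_int_vec].
have Iymu : Iy <= mu by apply: (ub_le_sup (cov_bound _ Q)); exists y.
have [t [z zZ <-] tlt] : exists2 t, [set norm2 (Q *m y - Q *m z) | z in is_int_vec] t
    & t < mu + eps.
  apply: inf_lt; last by rewrite -/Iy; lra.
  by exists (norm2 (Q *m y - Q *m 0)), 0 => // i; rewrite mxE rpred0.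
have eqz : Q *m (z - xc) = - (Q *m y - Q *m z) + - (s *: w).
  by apply/matrixP => i j; rewrite mulmxBr Qy !mxE; ring.
have zS : ellS Q p r z.
  apply/memS; rewrite eqz; apply: (le_trans (norm2_triangle _ _ _)).
  rewrite !norm2N norm2Z ger0_norm // -/nw snw; lra.
exists z; split => //.
rewrite decomp eqz dotvDr !dotvNr dotvZr -(norm2_sq _ w) -/nw.
have := CSN _ w (Q *m y - Q *m z); rewrite -/nw.
have := norm2_ge0 _ (Q *m y - Q *m z).
rewrite /L; nra.
Qed.
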